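(* Let $(\Omega,\mathcal A)$ be a measurable space admitting a universally consistent learning rule $\mathcal L$. Then for every subset $Y\subseteq\Omega$, the restriction $\mathcal L|_Y$ is a universally consistent learning rule for the measurable subspace $(Y,\mathcal A|_Y)$, where $\mathcal A|_Y=\{A\cap Y: A\in\mathcal A\}$.
   Context: For a measurable space $(\Omega,\mathcal A)$, give $\Omega\times\{0,1\}$ the product $\sigma$-algebra. A classifier is a measurable map $T:\Omega\to\{0,1\}$. A learning rule $\mathcal L$ is a family of maps $\mathcal L_n:\Omega^n\times\{0,1\}^n\times\Omega\to\{0,1\}$, $(\sigma,x)\mapsto\mathcal L_n(\sigma)(x)$, $n\ge1$, each measurable with respect to the product $\sigma$-algebra. For a probability measure $\tilde\mu$ on $\Omega\times\{0,1\}$, $\mathrm{err}_{\tilde\mu}(\mathcal L_n)=(\tilde\mu^n\otimes\tilde\mu)\{(\sigma,x,y):\mathcal L_n(\sigma)(x)\ne y\}$, and the Bayes error is $\ell^*(\tilde\mu)=\inf_T\tilde\mu\{(x,y):T(x)\ne y\}$ over all classifiers $T$. $\mathcal L$ is universally consistent if $\mathrm{err}_{\tilde\mu}(\mathcal L_n)\to\ell^*(\tilde\mu)$ as $n\to\infty$ for every probability measure $\tilde\mu$ on $\Omega\times\{0,1\}$. The restriction $\mathcal L|_Y$ is defined by $(\mathcal L|_Y)_n=\mathcal L_n|_{Y^n\times\{0,1\}^n\times Y}$. *)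

(* Defs.v *)
From HB Require Import structures.
From mathcomp Require Import all_boot all_order all_algebra.
From mathcomp Require Import all_classical all_reals all_analysis.
Set Implicit Arguments. Unset Strict Implicit. Unset Printing Implicit Defensive.
Import Order.TTheory GRing.Theory Num.Theory.
Local Open Scope classical_set_scope.
Local Open Scope ring_scope.

(* A learning rule on the measurable space T: for every n, a map
   (sample of n labelled points, query point) |-> label.  Samples
   Omega^n x {0,1}^n are encoded as n-tuples of pairs (T * bool). *)
Definition learning_rule (T : Type) := forall n : nat, n.-tuple (T * bool) -> T -> bool.

Definition is_learning_rule d (T : measurableType d) (L : learning_rule T) : Prop :=
  forall n, measurable_fun [set: n.-tuple (T * bool) * T]
                           (fun p : n.-tuple (T * bool) * T => L n p.1 p.2).

Fixpoint tuple_measure d (X : measurableType d) (R : realType)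
    (mu : {measure set X -> \bar R}) (n : nat) : set (n.-tuple X) -> \bar R :=
  match n with
  | 0 => fun A => ((\1_A : _ -> R) [tuple])%:E
  | n'.+1 => fun A =>
      (\int[mu]_x @tuple_measure d X R mu n' [set t : n'.-tuple X | A [tuple of x :: t]])%E
  end.
Arguments tuple_measure {d X R} mu n A.

(* err_mu(L_n) = (mu^n (x) mu) {(s, x, y) | L_n(s)(x) <> y} *)
Definition err d (T : measurableType d) (R : realType)
    (mu : probability (T * bool)%type R) (L : learning_rule T) (n : nat) : \bar R :=
  (\int[mu]_z tuple_measure mu n [set s : n.-tuple (T * bool) | L n s z.1 != z.2])%E.

Definition bayes_error d (T : measurableType d) (R : realType)
    (mu : probability (T * bool)%type R) : \bar R :=
  ereal_inf [set mu [set z | f z.1 != z.2] |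
             f in [set f : T -> bool | measurable_fun [set: T] f]].

Definition universally_consistent d (T : measurableType d) (R : realType)
    (L : learning_rule T) : Prop :=
  is_learning_rule L /\
  forall mu : probability (T * bool)%type R,
    err mu L n @[n --> \oo] --> bayes_error mu.

(* The measurable subspace (Y, A|_Y), for nonempty Y (MathComp measurable
   types must be pointed).  The proof hY is a phantom index. *)
Record subspace (T : Type) (Y : set T) (hY : Y !=set0) :=
  SubPt { subval : T ; subvalP : Y subval }.

Section subspace_inst.
Context d (T : measurableType d) (Y : set T) (hY : Y !=set0).

HB.instance Definition _ := gen_eqMixin (subspace hY).
HB.instance Definition _ := gen_choiceMixin (subspace hY).
HB.instance Definition _ :=
  isPointed.Build (subspace hY) (@SubPt T Y hY (projT1 (cid hY)) (projT2 (cid hY))).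

Definition subspace_measurable : set (set (subspace hY)) :=
  [set (@subval T Y hY) @^-1` A | A in measurable].

Lemma subspace_measurable0 : subspace_measurable set0.
Proof. by exists set0 => //; exact: measurable0. Qed.

Lemma subspace_measurableC A :
  subspace_measurable A -> subspace_measurable (~` A).
Proof.
by move=> [B mB <-]; exists (~` B); [exact: measurableC|].
Qed.

Lemma subspace_measurable_bigcup (F : (set (subspace hY))^nat) :
  (forall i, subspace_measurable (F i)) ->
  subspace_measurable (\bigcup_i F i).
Proof.
move=> mF; pose G i := projT1 (cid2 (mF i)).
exists (\bigcup_i G i).
  by apply: bigcupT_measurable => i; rewrite /G; case: cid2.
by rewrite preimage_bigcup; apply: eq_bigcupr => i _; rewrite /G; case: cid2.
Qed.

HB.instance Definition _ := @isMeasurable.Build d (subspace hY)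
  subspace_measurable subspace_measurable0 subspace_measurableC
  subspace_measurable_bigcup.
End subspace_inst.

Definition restrict_rule (T : Type) (Y : set T) (hY : Y !=set0)
    (L : learning_rule T) : learning_rule (subspace hY) :=
  fun n s x => L n [tuple of map (fun p : subspace hY * bool => (subval p.1, p.2)) s]
                 (subval x).
Arguments restrict_rule {T Y} hY L n s x.

(* Main.v *)
Require Import Defs.
From HB Require Import structures.
From mathcomp Require Import all_boot all_order all_algebra.
From mathcomp Require Import all_classical all_reals all_analysis.
From mathcomp Require Import measurable_realfun lebesgue_integral_fubini.
Set Implicit Arguments. Unset Strict Implicit. Unset Printing Implicit Defensive.
Import Order.TTheory GRing.Theory Num.Theory.
Local Open Scope classical_set_scope.
Local Open Scope ring_scope.

Section consf.
Context d (X : measurableType d) (n : nat).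
Definition consf (p : X * n.-tuple X) : n.+1.-tuple X := [tuple of p.1 :: p.2].
Lemma mconsf : measurable_fun setT consf.
Proof. exact: measurable_cons. Qed.
HB.instance Definition _ := isMeasurableFun.Build _ _ _ _ consf mconsf.
End consf.

Section TM.
Context d (X : measurableType d) (R : realType) (mu : probability X R).
Fixpoint tm n : probability (n.-tuple X) R :=
  match n with
  | 0 => (\d_[tuple] : probability _ R)
  | n'.+1 => distribution ((mu \x tm n')%E : probability _ R) (@consf _ X n')
  end.
End TM.
Section TMlemmas.
Context d (X : measurableType d) (R : realType) (mu : probability X R).
Local Open Scope ereal_scope.

Lemma msec n (A : set (n.+1.-tuple X)) x : measurable A ->
  measurable [set t : n.-tuple X | A [tuple of x :: t]].
Proof.
move=> mA.
have := (@measurable_cons _ _ _ _ (fun=> x) n id (measurable_cst _) (@measurable_id _ _ setT) measurableT A mA).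
by rewrite setTI.
Qed.

Lemma xsec_cons n (A : set (n.+1.-tuple X)) x :
  xsection (@consf _ X n @^-1` A) x = [set t : n.-tuple X | A [tuple of x :: t]].
Proof. by apply/seteqP; split => t; rewrite /xsection /= inE. Qed.

Lemma tmSE n A : measurable A ->
  tm mu n.+1 A = \int[mu]_x tm mu n [set t : n.-tuple X | A [tuple of x :: t]].
Proof.
move=> mA; rewrite /= /distribution /pushforward /product_measure1.
by apply: eq_integral => x _ /=; rewrite xsec_cons.
Qed.

Lemma mtmsec n A : measurable A ->
  measurable_fun [set: X] (fun x : X => tm mu n [set t : n.-tuple X | A [tuple of x :: t]]).
Proof.
move=> mA.
have := @measurable_fun_xsection _ _ X (n.-tuple X) R (tm mu n) (@consf _ X n @^-1` A).
rewrite /comp; under eq_fun do rewrite xsec_cons; apply.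
by have := mconsf measurableT mA; rewrite setTI.
Qed.

Lemma tmE n A : measurable A -> tuple_measure mu n A = tm mu n A.
Proof.
elim: n A => [|n IH] A mA; first by [].
rewrite tmSE //=; apply: eq_integral => x _; rewrite IH //; exact: msec.
Qed.
End TMlemmas.
Section Push.
Context d1 d2 (X : measurableType d1) (Z : measurableType d2) (R : realType)
  (mu : probability X R) (F : {mfun X >-> Z}).
Local Open Scope ereal_scope.

Definition mapF n (t : n.-tuple X) : n.-tuple Z := [tuple of map F t].

Lemma mmapF n : measurable_fun setT (@mapF n).
Proof.
apply/measurable_fun_tnthP => i.
rewrite (_ : _ \o _ = F \o (@tnth n X ^~ i)); last first.
  by apply/funext => t /=; rewrite tnth_map.
apply: measurableT_comp => //; exact: measurable_tnth.
Qed.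

Lemma tm_push n B : measurable B ->
  tm (distribution mu F) n B = tm mu n (@mapF n @^-1` B).
Proof.
elim: n B => [|n IH] B mB.
  have H : forall a b : 0.-tuple Z, B a -> B b.
    by move=> a b; rewrite (tuple0 a) (tuple0 b).
  rewrite /= !diracE /mapF /=.
  congr (_%:R%:E); rewrite /preimage /=.
  congr (nat_of_bool _).
  by apply/idP/idP => /set_mem h; apply/mem_set; move: h => /=; exact: H.
have mB' : measurable (@mapF n.+1 @^-1` B).
  by have := mmapF measurableT mB; rewrite setTI.
rewrite tmSE // tmSE // ge0_integral_distribution //; last first.
  exact: mtmsec.
apply: eq_integral => x _ /=; rewrite IH; last exact: msec.
congr (tm mu n _); apply/seteqP; split => t /=;
  have -> : mapF [tuple of x :: t] = [tuple of F x :: [seq F i | i <- t]] by apply: val_inj.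
all: done.
Qed.
End Push.

Section Sub.
Context d (T : measurableType d) (Y : set T) (hY : Y !=set0).
Local Notation S := (Defs.subspace hY).

Lemma msubval : measurable_fun [set: S] (@subval _ _ hY).
Proof. by move=> _ A mA; rewrite setTI; exists A. Qed.

Definition Fsub (p : S * bool) : T * bool := (subval p.1, p.2).
Lemma mFsub : measurable_fun setT Fsub.
Proof.
apply: measurable_fun_pair => //.
exact: (measurableT_comp msubval).
Qed.
HB.instance Definition _ := isMeasurableFun.Build _ _ _ _ Fsub mFsub.
End Sub.

Lemma mneq d (U : measurableType d) (f g : U -> bool) :
  measurable_fun setT f -> measurable_fun setT g ->
  measurable_fun setT (fun x => f x != g x).
Proof.
move=> mf mg.
rewrite (_ : (fun x => _) = (fun x => (f x && ~~ g x) || (~~ f x && g x))).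
  apply: measurable_or; apply: measurable_and => //; exact: measurable_neg.
by apply/funext => x; case: (f x); case: (g x).
Qed.

Unset Implicit Arguments.
Section Main.
Context (R : realType) d (T : measurableType d) (L : learning_rule T)
  (Y : set T) (hY : Y !=set0).
Local Notation S := (Defs.subspace hY).
Local Open Scope ereal_scope.

Lemma restrict_is_rule : is_learning_rule L -> is_learning_rule (restrict_rule hY L).
Proof.
move=> mL n.
rewrite (_ : (fun p => _) = (fun q : n.-tuple (T * bool) * T => L n q.1 q.2) \o
   (fun p : n.-tuple (S * bool) * S => (mapF (@Fsub _ _ _ hY) p.1, subval p.2))) //.
apply: measurableT_comp; first exact: mL.
apply: measurable_fun_pair.
  apply: measurableT_comp => //; exact: mmapF.
apply: measurableT_comp => //; exact: msubval.
Qed.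

Lemma err_eq (mL : is_learning_rule L) (mu : probability (S * bool)%type R) n :
  err mu (restrict_rule hY L) n = err (distribution mu (@Fsub _ _ _ hY)) L n.
Proof.
set nu := distribution mu (@Fsub _ _ _ hY).
have mL' : measurable_fun setT (fun p : n.-tuple (T * bool) * T => L n p.1 p.2) := mL n.
have mE z : measurable [set s : n.-tuple (T * bool) | L n s z.1 != z.2].
  have mf : measurable_fun setT (fun s : n.-tuple (T * bool) => L n s z.1).
    rewrite (_ : (fun s => _) = (fun p : n.-tuple (T * bool) * T => L n p.1 p.2) \o (fun s => (s, z.1))) //.
    apply: measurableT_comp => //; exact: measurable_fun_pair.
  have := @mneq _ _ (fun s : n.-tuple (T * bool) => L n s z.1) (fun=> z.2) mf (measurable_cst _) measurableT [set true] I.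
  by rewrite setTI.
rewrite /err.
transitivity (\int[mu]_w ((fun z => tm nu n [set s : n.-tuple (T * bool) | L n s z.1 != z.2]) \o (@Fsub _ _ _ hY)) w).
  apply: eq_integral => w _ /=; rewrite tm_push; last exact: (mE (Fsub w)).
  apply: etrans (@tmE _ _ R mu n _ _) _ => //.
  by have := mmapF (@Fsub _ _ _ hY) measurableT (mE (Fsub w)); rewrite setTI.
transitivity (\int[nu]_z tm nu n [set s : n.-tuple (T * bool) | L n s z.1 != z.2]); last first.
  by apply: eq_integral => z _; apply/esym/tmE.
symmetry; apply: ge0_integral_distribution => //.
- pose G := [set p : n.-tuple (T * bool) * (T * bool) | L n p.1 p.2.1 != p.2.2].
  have mG : measurable G.
    have mf : measurable_fun setT (fun p : n.-tuple (T * bool) * (T * bool) => L n p.1 p.2.1).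
      rewrite (_ : (fun p => _) = (fun p : n.-tuple (T * bool) * T => L n p.1 p.2) \o (fun p : n.-tuple (T * bool) * (T * bool) => (p.1, p.2.1))) //.
      apply: measurableT_comp => //; apply: measurable_fun_pair => //.
      by apply: measurableT_comp.
    have mg : measurable_fun setT (fun p : n.-tuple (T * bool) * (T * bool) => p.2.2).
      by apply: measurableT_comp.
    by have := @mneq _ _ _ _ mf mg measurableT [set true] I; rewrite setTI.
  have := measurable_fun_ysection (tm nu n) mG.
  congr measurable_fun; apply/funext => y /=; congr (tm nu n _).
  by apply/seteqP; split => s; rewrite /ysection /= inE.
Qed.

Lemma bayes_eq (mu : probability (S * bool)%type R) :
  bayes_error mu = bayes_error (distribution mu (@Fsub _ _ _ hY)).
Proof.
rewrite /bayes_error; congr ereal_inf; apply/seteqP; split.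
- move=> _ [f mf <-].
  have := mf measurableT [set true] I; rewrite setTI => -[A mA hA].
  exists (fun x => `[< A x >]).
    apply: (measurable_fun_bool true); rewrite setTI.
    rewrite (_ : _ @^-1` _ = A) //; apply/seteqP; split => x /=.
      by move/asboolP.
    by move=> Ax; apply/asboolP.
  rewrite /distribution /pushforward; congr (mu _); apply/seteqP; split => -[y b] /=.
    suff -> : f y = `[< A (subval y) >] by [].
    apply/idP/idP.
      by move=> fy; apply/asboolP; have : (f @^-1` [set true]) y by []; rewrite -hA.
    by move/asboolP => Ay; have : (@subval _ _ hY @^-1` A) y by []; rewrite hA => ->.
  suff -> : f y = `[< A (subval y) >] by [].
  apply/idP/idP.
    by move=> fy; apply/asboolP; have : (f @^-1` [set true]) y by []; rewrite -hA.
  by move/asboolP => Ay; have : (@subval _ _ hY @^-1` A) y by []; rewrite hA => ->.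
- move=> _ [g mg <-].
  exists (g \o @subval _ _ hY); first by apply: measurableT_comp => //; exact: msubval.
  by [].
Qed.

End Main.

Theorem mainTheorem3 (R : realType) (d : measure_display) (T : measurableType d)
    (L : learning_rule T) :
  universally_consistent R L ->
  forall (Y : set T) (hY : Y !=set0),
    universally_consistent R (restrict_rule hY L).
Proof.
move=> [mL hL] Y hY; split; first exact: restrict_is_rule.
move=> mu.
have E : (fun n => err mu (restrict_rule hY L) n) = (fun n => err (distribution mu (@Fsub _ _ _ hY)) L n).
  by apply/funext => n; exact: err_eq.
rewrite E bayes_eq; exact: hL.
Qed.
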